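(* Let $0<\varepsilon<2/9$ and let $\mathbf{U}$ be the $7\times 7$ matrix $$\mathbf{U}=\begin{pmatrix} 0 & -1 & \varepsilon & -10 & -\tfrac13+\varepsilon & -\tfrac13+\varepsilon & -\tfrac13+\varepsilon\\ \varepsilon & 0 & -1 & -10 & -\tfrac13+\varepsilon & -\tfrac13+\varepsilon & -\tfrac13+\varepsilon\\ -1 & \varepsilon & 0 & -10 & -\tfrac13+\varepsilon & -\tfrac13+\varepsilon & -\tfrac13+\varepsilon\\ -2 & -2 & 2 & 0 & -\tfrac13 & -\tfrac13 & -\tfrac13\\ -\tfrac13 & -\tfrac13 & -\tfrac13 & 10 & 0 & -1 & \varepsilon\\ -\tfrac13 & -\tfrac13 & -\tfrac13 & 10 & \varepsilon & 0 & -1\\ -\tfrac13 & -\tfrac13 & -\tfrac13 & 10 & -1 & \varepsilon & 0 \end{pmatrix},\qquad \mathbf{R}=\begin{pmatrix} 0 & -1 & \varepsilon\\ \varepsilon & 0 & -1\\ -1 & \varepsilon & 0\end{pmatrix}.$$ Let $\mathbf{x}(\cdot)$ be a solution of the best-reply dynamics in the game with payoff matrix $\mathbf{U}$ such that neither $x_1(0)=x_2(0)=x_3(0)$ nor $x_5(0)=x_6(0)=x_7(0)$. Set $\lambda=x_1+x_2+x_3$, $\mu=x_5+x_6+x_7$ (these are positive for all $t\ge0$), $\bar{\mathbf{x}}=(x_1,x_2,x_3)/\lambda$ and $\hat{\mathbf{x}}=(x_5,x_6,x_7)/\mu$. Then for almost every $t\ge 0$, $$\dot{\bar{\mathbf{x}}}\in\Big(1+\frac{\dot\lambda}{\lambda}\Big)\big(BR_{\mathbf{R}}(\bar{\mathbf{x}})-\bar{\mathbf{x}}\big)\quad\text{and}\quad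 \dot{\hat{\mathbf{x}}}\in\Big(1+\frac{\dot\mu}{\mu}\Big)\big(BR_{\mathbf{R}}(\hat{\mathbf{x}})-\hat{\mathbf{x}}\big).$$
   Context: $S_n=\{\mathbf{x}\in\mathbb{R}_+^n:\sum_i x_i=1\}$. For a square matrix $\mathbf{A}$ of size $n$, $BR_{\mathbf{A}}(\mathbf{x})=\{\mathbf{y}\in S_n:\mathbf{y}\cdot\mathbf{A}\mathbf{x}=\max_{\mathbf{z}\in S_n}\mathbf{z}\cdot\mathbf{A}\mathbf{x}\}$. The best-reply dynamics in the game with payoff matrix $\mathbf{U}$ is the differential inclusion $\dot{\mathbf{x}}\in BR_{\mathbf{U}}(\mathbf{x})-\mathbf{x}$; a solution is an absolutely continuous $\mathbf{x}:\mathbb{R}_+\to S_7$ satisfying it for almost every $t$. *)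

(* Defs.v *)
From HB Require Import structures.
From mathcomp Require Import all_boot all_order all_algebra.
From mathcomp Require Import all_classical all_reals all_analysis.
Unset Printing Implicit Defensive.
Import Order.TTheory GRing.Theory Num.Theory.
Local Open Scope classical_set_scope.
Local Open Scope ring_scope.

Section Defs.
Context {R : realType}.

Definition simplex (n : nat) : set ('I_n -> R) :=
  [set x | (forall i, 0 <= x i) /\ \sum_(i < n) x i = 1].

Definition mxapp {n : nat} (A : 'M[R]_n) (x : 'I_n -> R) : 'I_n -> R :=
  fun i => \sum_(j < n) A i j * x j.

Definition dotv {n : nat} (y z : 'I_n -> R) : R := \sum_(i < n) y i * z i.

Definition BR {n : nat} (A : 'M[R]_n) (x : 'I_n -> R) : set ('I_n -> R) :=
  [set y | simplex n y /\
           (forall z, simplex n z -> dotv z (mxapp A x) <= dotv y (mxapp A x))].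

Definition abs_continuous_on (a b : R) (f : R -> R) : Prop :=
  forall e : R, 0 < e -> exists2 d : R, 0 < d &
    forall (m : nat) (I : 'I_m -> R * R),
      (forall k, a <= (I k).1 /\ (I k).1 <= (I k).2 /\ (I k).2 <= b) ->
      (forall k l, k != l -> (I k).2 <= (I l).1 \/ (I l).2 <= (I k).1) ->
      \sum_(k < m) ((I k).2 - (I k).1) < d ->
      \sum_(k < m) `|f (I k).2 - f (I k).1| < e.

Definition BR_solution {n : nat} (U : 'M[R]_n) (x : R -> 'I_n -> R) : Prop :=
  (forall t, 0 <= t -> simplex n (x t)) /\
  (forall T, 0 <= T -> forall i, abs_continuous_on 0 T (fun s => x s i)) /\
  {ae (@lebesgue_measure R), forall t, 0 <= t ->
     (forall i, derivable (fun s => x s i) t 1) /\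
     exists2 y, BR U (x t) y &
       forall i, derive1 (fun s => x s i) t = y i - x t i}.

Definition third : R := 3^-1.

(* The 7x7 payoff matrix U (rows/columns indexed 0..6 for 1..7). *)
Definition U_rows (eps : R) : seq (seq R) :=
  [:: [:: 0; -1; eps; -10; - third + eps; - third + eps; - third + eps];
      [:: eps; 0; -1; -10; - third + eps; - third + eps; - third + eps];
      [:: -1; eps; 0; -10; - third + eps; - third + eps; - third + eps];
      [:: -2; -2; 2; 0; - third; - third; - third];
      [:: - third; - third; - third; 10; 0; -1; eps];
      [:: - third; - third; - third; 10; eps; 0; -1];
      [:: - third; - third; - third; 10; -1; eps; 0]].

Definition Umx (eps : R) : 'M[R]_7 :=
  \matrix_(i < 7, j < 7) nth 0 (nth [::] (U_rows eps) i) j.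

Definition R_rows (eps : R) : seq (seq R) :=
  [:: [:: 0; -1; eps];
      [:: eps; 0; -1];
      [:: -1; eps; 0]].

Definition Rmx (eps : R) : 'M[R]_3 :=
  \matrix_(i < 3, j < 3) nth 0 (nth [::] (R_rows eps) i) j.

(* lambda = x1+x2+x3 (indices 0,1,2), mu = x5+x6+x7 (indices 4,5,6) *)
Definition lam (x : R -> 'I_7 -> R) (t : R) : R :=
  \sum_(i < 3) x t (inord i).
Definition muu (x : R -> 'I_7 -> R) (t : R) : R :=
  \sum_(i < 3) x t (inord (i + 4)).

Definition xbar (x : R -> 'I_7 -> R) (t : R) : 'I_3 -> R :=
  fun i => x t (inord i) / lam x t.
Definition xhat (x : R -> 'I_7 -> R) (t : R) : 'I_3 -> R :=
  fun i => x t (inord (i + 4)) / muu x t.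

End Defs.

(* Main.v *)
Require Import Defs.
From HB Require Import structures.
From mathcomp Require Import all_boot all_order all_algebra.
From mathcomp Require Import all_classical all_reals all_analysis.
From mathcomp Require Import ring lra measurable_realfun.
Import Order.TTheory GRing.Theory Num.Theory.
Import numFieldNormedType.Exports.
Local Open Scope classical_set_scope.
Local Open Scope ring_scope.
Lemma fam_len (R : realType) (U : set R) (m : nat) (I : 'I_m -> R * R) :
  measurable U ->
  (forall k, (I k).1 <= (I k).2) ->
  (forall k l, k != l -> (I k).2 <= (I l).1 \/ (I l).2 <= (I k).1) ->
  (forall k, [set` `](I k).1, (I k).2]] `<=` U) ->
  ((\sum_(k < m) ((I k).2 - (I k).1))%:E <= (@lebesgue_measure R) U)%E.
Proof.
move=> mU le12 dis sub.
pose F := fun k => [set` `](I k).1, (I k).2]] : set R.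
have mF k : measurable (F k) by exact: measurable_itv.
have tF : trivIset setT F.
  move=> k l _ _ [z [Fk Fl]]; apply/eqP; apply/negPn/negP => /dis.
  move: Fk Fl; rewrite /F /= !in_itv /= => /andP[a1 a2] /andP[b1 b2].
  by case=> h; [have := le_lt_trans (le_trans a2 h) b1|have := le_lt_trans (le_trans b2 h) a1]; rewrite ltxx.
have := @measure_bigsetU_ord _ _ _ (@lebesgue_measure R) m xpredT F mF tF.
rewrite -sumEFin => E.
apply: (@le_trans _ _ ((@lebesgue_measure R) (\big[setU/set0]_(i < m | xpredT i) F i))).
  rewrite E; apply: lee_sum => k _.
  rewrite /F /= (lebesgue_measure_itv `](I k).1, (I k).2]) /= lte_fin.
  case: ltP => h //; rewrite lee_fin subr_le0; exact: h.
apply: le_measure; rewrite ?inE //.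
  by apply: bigsetU_measurable => k _; exact: mF.
apply: (big_ind (fun A => A `<=` U)) => //.
  by move=> A B AU BU z [/AU|/BU].
by move=> k _; exact: sub.
Qed.
Lemma dini_of_derive (R : realType) (g : R -> R) t :
  derivable g t 1 -> 0 <= derive1 g t ->
  forall e, 0 < e -> exists2 h, 0 < h &
    forall u, 0 < u -> u <= h -> g t - e * u <= g (t + u).
Proof.
move=> df d0 e e0.
have cv : (fun h : R => h^-1 *: ((g \o shift t) (h *: (1:R)) - g t)) @ 0^' --> derive1 g t.
  by rewrite derive1E; exact: df.
move/cvgrPdist_lt : cv => /(_ e e0).
rewrite near_withinE => /nbhs_ballP [r /= r0 Hr].
exists (r / 2); first by rewrite divr_gt0.
move=> u u0 ur.
have bu : ball 0 r u.
  rewrite /ball /= sub0r normrN gtr0_norm //.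
  by apply: le_lt_trans ur _; rewrite ltr_pdivrMr // ltr_pMr // ltr1n.
have := Hr u bu; rewrite /= gt_eqF //= => /(_ isT).
rewrite /shift /=.
move=> H0.
have H : `|derive1 g t - u^-1 * (g (u * 1 + t) - g t)| < e := H0.
rewrite mulr1 [u + t]addrC in H.
have H2 : derive1 g t - e < u^-1 * (g (t + u) - g t).
  move: H; rewrite ltr_distlC => /andP[+ _]; by [].
have H3 : - e * u < g (t + u) - g t.
  rewrite -(ltr_pM2r u0) mulrAC mulVf ?gt_eqF // mul1r in H2.
  apply: le_lt_trans H2; rewrite ler_pM2r //; lra.
nra.
Qed.
Local Open Scope ring_scope.
Lemma ac_cont (R : realType) (a b : R) g : abs_continuous_on a b g ->
  forall e, 0 < e -> exists2 d, 0 < d & forall u v, a <= u -> u <= v -> v <= b ->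
    v - u < d -> `|g v - g u| < e.
Proof.
move=> ac e e0; have [d d0 Hd] := ac e e0; exists d => // u v au uv vb vud.
have := Hd 1%N (fun _ => (u, v)).
rewrite !big_ord1 /=; apply => //.
by move=> k l; rewrite !ord1.
Qed.

Section Creep.
Variables (R : realType) (a b : R) (g : R -> R) (U : set R) (eps del : R).
Hypothesis ab : a <= b.
Hypothesis eps0 : 0 < eps.
Hypothesis mU : measurable U.
Hypothesis muU : ((@lebesgue_measure R) U < del%:E)%E.
Hypothesis Hdel : forall (m : nat) (I : 'I_m -> R * R),
      (forall k, a <= (I k).1 /\ (I k).1 <= (I k).2 /\ (I k).2 <= b) ->
      (forall k l, k != l -> (I k).2 <= (I l).1 \/ (I l).2 <= (I k).1) ->
      \sum_(k < m) ((I k).2 - (I k).1) < del ->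
      \sum_(k < m) `|g (I k).2 - g (I k).1| < eps.

Definition goodf (s : R) (m : nat) (I : 'I_m -> R * R) :=
  [/\ (forall k, a <= (I k).1 /\ (I k).1 <= (I k).2 /\ (I k).2 <= s),
      (forall k l, k != l -> (I k).2 <= (I l).1 \/ (I l).2 <= (I k).1) &
      (forall k, [set` `](I k).1, (I k).2]] `<=` U)].

Definition Sf (s : R) : set R := [set v | exists m (I : 'I_m -> R * R),
  goodf s m I /\ v = \sum_(k < m) `|g (I k).2 - g (I k).1|].

Lemma Sf0 s : Sf s 0.
Proof.
exists 0%N, (fun _ => (0, 0)); split; last by rewrite big_ord0.
by split => [[]|[]|[]].
Qed.

Lemma Sf_ub s : s <= b -> forall v, Sf s v -> v < eps.
Proof.
move=> sb v [m [I [[H1 H2 H3] ->]]].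
apply: Hdel => //.
  move=> k; have [? [? ?]] := H1 k; do !split => //; exact: le_trans sb.
have := @fam_len R U m I mU (fun k => (H1 k).2.1) H2 H3.
move=> /le_lt_trans /(_ muU); by rewrite lte_fin.
Qed.

Definition B s := sup (Sf s).

Lemma Sf_has_ub s : s <= b -> has_ubound (Sf s).
Proof. by move=> sb; exists eps => v /(@Sf_ub s sb) /ltW. Qed.

Lemma B_ge s v : s <= b -> Sf s v -> v <= B s.
Proof. by move=> sb Sv; apply: ub_le_sup => //; exact: Sf_has_ub. Qed.

Lemma B_ge0 s : s <= b -> 0 <= B s.
Proof. by move=> sb; apply: B_ge => //; exact: Sf0. Qed.

Lemma B_le s : s <= b -> B s <= eps.
Proof.
move=> sb; apply: ge_sup; first by exists 0; exact: Sf0.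
by move=> v /(@Sf_ub s sb) /ltW.
Qed.

Lemma B_mono s s' : s <= s' -> s' <= b -> B s <= B s'.
Proof.
move=> ss' s'b; apply: ge_sup; first by exists 0; exact: Sf0.
move=> v [m [I [[H1 H2 H3] ->]]]; apply: B_ge => //.
exists m, I; split => //; split => // k.
have [? [? ?]] := H1 k; do !split => //; exact: le_trans ss'.
Qed.

Lemma B_jump s s' : a <= s -> s <= s' -> s' <= b ->
  [set` `]s, s']] `<=` U -> B s + `|g s' - g s| <= B s'.
Proof.
move=> as_ ss' s'b sub.
rewrite -lerBrDr; apply: ge_sup; first by exists 0; exact: Sf0.
move=> v [m [I [[H1 H2 H3] ->]]]; rewrite lerBrDr.
apply: B_ge => //.
pose I' := fun k : 'I_m.+1 => match unlift ord_max k with Some j => I j | None => (s, s') end.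
exists m.+1, I'; split.
  split.
  - move=> k; rewrite /I'; case: (unliftP ord_max k) => [j Ek|Ek].
      have [? [? ?]] := H1 j; do !split => //; exact: le_trans ss'.
    by [].
  - move=> k l kl; rewrite /I'.
    case: (unliftP ord_max k) => [j Ek|Ek]; case: (unliftP ord_max l) => [j' El|El].
    + apply: H2; apply: contra kl => /eqP jj; by rewrite Ek El jj.
    + by left; have [_ [_ ?]] := H1 j.
    + by right; have [_ [_ ?]] := H1 j'.
    + by move: kl; rewrite Ek El eqxx.
  - move=> k; rewrite /I'; case: (unliftP ord_max k) => [j Ek|Ek] //.
rewrite big_ord_recr /= /I' unlift_none /=; congr (_ + _).
apply: eq_bigr => k _ /=.
have -> : widen_ord (leqnSn m) k = lift ord_max k by apply: val_inj; rewrite /= /bump leqNgt ltn_ord.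
by rewrite liftK.
Qed.

Hypothesis acg : abs_continuous_on a b g.
Variable N : set R.
Hypothesis NU : N `<=` U.
Hypothesis oU : open U.
Hypothesis dini : forall t, a <= t -> t < b -> ~ N t -> forall e, 0 < e ->
  exists2 h, 0 < h & forall u, 0 < u -> u <= h -> g t - e * u <= g (t + u).

Lemma creep : g a - eps * (b - a) - eps <= g b.
Proof.
pose P u := g a - eps * (u - a) - B u <= g u.
pose S := [set s | a <= s /\ s <= b /\ forall u, a <= u -> u <= s -> P u].
have Pa : P a.
  rewrite /P subrr mulr0 subr0 lerBlDr lerDl; exact: B_ge0.
have Sa : S a.
  split=> //; split=> // u au ua; have -> : u = a by apply/eqP; rewrite eq_le ua au.
  exact: Pa.
have hS : has_ubound S by exists b => u [_ []].
set s := sup S.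
have as_ : a <= s := ub_le_sup hS Sa.
have sb : s <= b by apply: ge_sup; [exists a|move=> u [_ []]].
have Plt : forall u, a <= u -> u < s -> P u.
  move=> u au us.
  have su0 : 0 < s - u by rewrite subr_gt0.
  have [e [_ [_ He]] se] := @sup_adherent R S (s - u) su0 (conj (ex_intro _ a Sa) hS).
  by apply: He => //; move: se; rewrite /s opprB addrCA subrr addr0 => /ltW.
have Ps : P s.
  have [sa|sa] := eqVneq s a; first by rewrite sa.
  have lt_as : a < s by rewrite lt_neqAle eq_sym sa as_.
  rewrite /P leNgt; apply/negP => hlt.
  pose gap := g a - eps * (s - a) - B s - g s.
  have gap0 : 0 < gap by rewrite /gap subr_gt0.
  have [d d0 Hd] := @ac_cont R a b g acg gap gap0.
  pose u := Num.max a (s - d / 2).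
  have au : a <= u by rewrite le_max lexx.
  have us : u < s by rewrite /u gt_max lt_as /= ltrBlDr ltrDl divr_gt0.
  have Pu := Plt u au us.
  have sud : s - u < d.
    have : s - d / 2 <= u by rewrite le_max lexx orbT.
    move=> h; have : d / 2 < d by rewrite ltr_pdivrMr // ltr_pMr // ltr1n.
    lra.
  have := Hd u s au (ltW us) sb sud.
  have Bus : B u <= B s := @B_mono u s (ltW us) sb.
  have epsus : eps * (u - a) <= eps * (s - a) by apply: ler_wpM2l; [exact: ltW|lra].
  move: Pu; rewrite /P /gap => Pu.
  rewrite ltr_norml => /andP[h1 h2].
  lra.
have Ss : S s.
  split=> //; split=> // u au us.
  have [->|une] := eqVneq u s; first exact: Ps.
  by apply: Plt => //; rewrite lt_neqAle une us.
have sb' : s = b.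
  apply/eqP; rewrite eq_le sb /=; rewrite leNgt; apply/negP => slb.
  suff [s' ss' [s'b Ps']] : exists2 s', s < s' & s' <= b /\ forall u, s < u -> u <= s' -> P u.
    have : S s'.
      split; first by apply: le_trans as_ (ltW ss').
      split=> // u au us'.
      have [us|su] := leP u s; first by have [_ [_ ]] := Ss; apply.
      exact: Ps'.
    move=> Ss'; have := ub_le_sup hS Ss'; rewrite -/s => h.
    by move: ss'; rewrite ltNge h.
  case: (pselect (N s)) => Ns.
  - have : nbhs s U by apply: open_nbhs_nbhs; split => //; exact: NU.
    move=> /nbhs_ballP [r /= r0 Hr].
    exists (Num.min b (s + r / 2)).
      by rewrite lt_min slb /= ltrDl divr_gt0.
    split; first by rewrite ge_min lexx.
    move=> u su us'.
    have ub : u <= b by move: us'; rewrite le_min => /andP[].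
    have usr : u <= s + r / 2 by move: us'; rewrite le_min => /andP[].
    have sub : [set` `]s, u]] `<=` U.
      move=> z /=; rewrite in_itv /= => /andP[sz zu]; apply: Hr.
      rewrite /ball /= distrC ger0_norm; last by rewrite subr_ge0 ltW.
      have : r / 2 < r by rewrite ltr_pdivrMr // ltr_pMr // ltr1n.
      lra.
    have Bj := @B_jump s u as_ (ltW su) ub sub.
    have epsus : eps * (s - a) <= eps * (u - a) by apply: ler_wpM2l; [exact: ltW|lra].
    have gd : g s - `|g u - g s| <= g u.
      have := ler_norm (g s - g u); rewrite distrC; lra.
    move: Ps; rewrite /P => Ps'; rewrite /P; lra.
  - have [h h0 Hh] := dini s as_ slb Ns eps eps0.
    exists (Num.min b (s + h)).
      by rewrite lt_min slb /= ltrDl.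
    split; first by rewrite ge_min lexx.
    move=> u su us'.
    have ub : u <= b by move: us'; rewrite le_min => /andP[].
    have ush : u <= s + h by move: us'; rewrite le_min => /andP[].
    have := Hh (u - s); rewrite subr_gt0 su lerBlDl => /(_ isT ush).
    rewrite [s + (u - s)]addrC subrK => gu.
    have Bsu : B s <= B u := @B_mono s u (ltW su) ub.
    move: Ps; rewrite /P => Ps'; rewrite /P.
    have : eps * (u - s) = eps * (u - a) - eps * (s - a) by rewrite -mulrBr; congr (_ * _); lra.
    lra.
have := Ps; rewrite /P sb' => Pb.
have := @B_le b (lexx b); lra.
Qed.

End Creep.

Lemma ac_mono (R : realType) (a b : R) (g : R -> R) (N : set R) :
  a <= b -> abs_continuous_on a b g -> measurable N ->
  (@lebesgue_measure R) N = 0%E ->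
  (forall t, a <= t -> t < b -> ~ N t -> forall e, 0 < e ->
     exists2 h, 0 < h & forall u, 0 < u -> u <= h -> g t - e * u <= g (t + u)) ->
  g a <= g b.
Proof.
move=> ab acg mN N0 dini.
suff H : forall eps, 0 < eps -> g a - eps * (b - a) - eps <= g b.
  apply/ler_addgt0Pr => e e0.
  have c0 : 0 < b - a + 1 by lra.
  have := H (e / (b - a + 1)) (divr_gt0 e0 c0).
  have E : e / (b - a + 1) * (b - a) + e / (b - a + 1) = e.
    by field; rewrite gt_eqF.
  lra.
move=> eps eps0.
have [del del0 Hdel] := acg eps eps0.
have Nfin : ((@lebesgue_measure R) N < +oo)%E by rewrite N0 ltry.
have [U [oU NU muUN]] := lebesgue_regularity_outer mN Nfin del0.
have mU : measurable U := open_measurable oU.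
have muU : ((@lebesgue_measure R) U < del%:E)%E.
  rewrite (@measureDI _ _ _ (@lebesgue_measure R) _ _ mU mN).
  apply: le_lt_trans muUN; rewrite -[X in (_ <= X)%E]adde0; apply: leeD => //.
  rewrite -N0; apply: le_measure; rewrite ?inE //.
    exact: measurableI.
exact: (@creep R a b g U eps del ab eps0 mU muU Hdel acg N NU oU dini).
Qed.
Lemma sum7 (R : realType) (f : 'I_7 -> R) : \sum_(i < 7) f i =
  f (inord 0) + f (inord 1) + f (inord 2) + f (inord 3) + f (inord 4) + f (inord 5) + f (inord 6).
Proof.
have -> : \sum_(i < 7) f i = \sum_(i < 7) f (inord i) by apply: eq_bigr => i _; rewrite inord_val.
rewrite -(big_mkord xpredT (fun k => f (inord k))).
by rewrite !big_nat_recr //= big_geq // add0r.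
Qed.

Lemma sum3 (R : realType) (f : 'I_3 -> R) : \sum_(i < 3) f i =
  f (inord 0) + f (inord 1) + f (inord 2).
Proof.
have -> : \sum_(i < 3) f i = \sum_(i < 3) f (inord i) by apply: eq_bigr => i _; rewrite inord_val.
rewrite -(big_mkord xpredT (fun k => f (inord k))).
by rewrite !big_nat_recr //= big_geq // add0r.
Qed.

Lemma Uentry (R : realType) (eps : R) (i j : nat) : (i < 7)%N -> (j < 7)%N ->
  Umx eps (inord i) (inord j) = nth 0 (nth [::] (U_rows eps) i) j.
Proof. by move=> hi hj; rewrite /Umx mxE !inordK. Qed.

Lemma Rentry (R : realType) (eps : R) (i j : nat) : (i < 3)%N -> (j < 3)%N ->
  Rmx eps (inord i) (inord j) = nth 0 (nth [::] (R_rows eps) i) j.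
Proof. by move=> hi hj; rewrite /Rmx mxE !inordK. Qed.

Lemma fin_alg (R : realType) (L c a0 a1 a2 w0 w1 w2 r0 r1 r2 : R) :
  0 < L -> 0 < a0 + a1 + a2 -> w0 + w1 + w2 = 1 ->
  (a0+a1+a2)*w0*(L*r0+c) + (a0+a1+a2)*w1*(L*r1+c) + (a0+a1+a2)*w2*(L*r2+c)
    <= a0*(L*r0+c) + a1*(L*r1+c) + a2*(L*r2+c) ->
  w0*r0 + w1*r1 + w2*r2 <=
    a0/(a0+a1+a2)*r0 + a1/(a0+a1+a2)*r1 + a2/(a0+a1+a2)*r2.
Proof.
move=> L0 S0 hw I.
have -> : a0/(a0+a1+a2)*r0 + a1/(a0+a1+a2)*r1 + a2/(a0+a1+a2)*r2 =
    (a0*r0+a1*r1+a2*r2)/(a0+a1+a2) by field; rewrite gt_eqF.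
rewrite ler_pdivlMr //.
have E : (a0+a1+a2)*w0*(L*r0+c) + (a0+a1+a2)*w1*(L*r1+c) + (a0+a1+a2)*w2*(L*r2+c)
    - (a0*(L*r0+c) + a1*(L*r1+c) + a2*(L*r2+c)) =
  L * ((w0*r0 + w1*r1 + w2*r2) * (a0+a1+a2) - (a0*r0+a1*r1+a2*r2))
  + c * (a0+a1+a2) * (w0+w1+w2-1) by ring.
rewrite hw subrr mulr0 addr0 in E.
have : L * ((w0*r0 + w1*r1 + w2*r2) * (a0+a1+a2) - (a0*r0+a1*r1+a2*r2)) <= 0.
  by rewrite -E subr_le0.
rewrite pmulr_rle0 // subr_le0; exact.
Qed.

Lemma br_block (R : realType) (o : nat) (v y : 'I_7 -> R) (L c : R) (r : 'I_3 -> R) :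
  (o = 0 \/ o = 4)%N -> 0 < L -> simplex 7 y ->
  (forall z, simplex 7 z -> dotv z v <= dotv y v) ->
  (forall i : 'I_3, v (inord (i + o)) = L * r i + c) ->
  0 < \sum_(i < 3) y (inord (i + o)) ->
  forall w, simplex 3 w ->
    dotv w r <= dotv (fun i => y (inord (i + o)) / \sum_(i < 3) y (inord (i + o))) r.
Proof.
move=> ho L0 [yp ys] ybest hv Y0 w [wp ws].
set Y := \sum_(i < 3) y (inord (i + o)) in Y0 *.
pose y' := fun j : 'I_7 => if ((o <= j) && (j < o + 3))%N then Y * w (inord (j - o)) else y j.
have h0 := hv (inord 0); have h1 := hv (inord 1); have h2 := hv (inord 2).
rewrite !inordK // in h0 h1 h2.
have Yp : 0 <= Y by exact: ltW.
rewrite sum3 in ws.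
case: ho => ho; subst o.
all: have sy' : simplex 7 y' by
  split; [move=> j; rewrite /y'; case: ifP => _ //; exact: mulr_ge0|
  move: ys; rewrite !sum7 /y' /Y sum3 /= !inordK //= => ys;
  have Ew : w (inord 2) = 1 - w (inord 0) - w (inord 1) by lra];
  rewrite Ew; lra.
all: have I := ybest y' sy'; move: I; rewrite /dotv !sum7 !sum3 /y' /Y /= !inordK //=.
all: rewrite /= in h0 h1 h2; rewrite h0 h1 h2 => I.
all: rewrite !sum3 /= !inordK // in I *.
1: rewrite !addn0 in I *.
2: rewrite -[(0+4)%N]/4%N -[(1+4)%N]/5%N -[(2+4)%N]/6%N in I *.
all: rewrite ?subn0 in I *.
all: move: Y0; rewrite /Y sum3 /= !inordK //.
1: rewrite !addn0.
2: rewrite -[(0+4)%N]/4%N -[(1+4)%N]/5%N -[(2+4)%N]/6%N.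
all: move=> Y0; apply: (@fin_alg R L c) => //.
1: by move: I; rewrite !lerD2r.
by move: I; rewrite -!addrA !lerD2l !addrA.
Qed.

Lemma br_exists3 (R : realType) (r : 'I_3 -> R) :
  exists z, simplex 3 z /\ forall w, simplex 3 w -> dotv w r <= dotv z r.
Proof.
have [i Hi] : exists i : 'I_3, forall j, r j <= r i.
  have Hj : forall j : 'I_3, j = inord 0 \/ j = inord 1 \/ j = inord 2.
    move=> j; case: j => [[|[|[|k]]] hk]; try by [].
    - by left; apply: val_inj; rewrite /= inordK.
    - by right; left; apply: val_inj; rewrite /= inordK.
    - by right; right; apply: val_inj; rewrite /= inordK.
  case: (lerP (r (inord 0)) (r (inord 1))) => h01;
  case: (lerP (r (inord 1)) (r (inord 2))) => h12;
  case: (lerP (r (inord 0)) (r (inord 2))) => h02.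
  all: try (exists (inord 2); move=> j; case: (Hj j) => [->|[->|->]]; by lra).
  all: try (exists (inord 1); move=> j; case: (Hj j) => [->|[->|->]]; by lra).
  all: try (exists (inord 0); move=> j; case: (Hj j) => [->|[->|->]]; by lra).
exists (fun j => if j == i then 1 else 0); split.
  split; first by move=> j; case: ifP.
  by rewrite (bigD1 i) //= ?eqxx big1 ?addr0 // => j /negbTE ->.
move=> w [w0 ws].
have -> : dotv (fun j => if j == i then 1 else 0) r = r i.
  rewrite /dotv (bigD1 i) //= eqxx mul1r big1 ?addr0 // => j ji.
  by rewrite (negbTE ji) mul0r.
rewrite /dotv.
apply: (@le_trans _ _ (\sum_(j < 3) w j * r i)).
  by apply: ler_sum => j _; apply: ler_wpM2l.
by rewrite -mulr_suml ws mul1r.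
Qed.

Lemma blockU0 (R : realType) (eps : R) (x : 'I_7 -> R) :
  0 < \sum_(i < 3) x (inord (i + 0)) ->
  forall i : 'I_3, mxapp (Umx eps) x (inord (i + 0)) =
    (\sum_(i < 3) x (inord (i + 0))) * mxapp (Rmx eps) (fun j => x (inord (j + 0)) / \sum_(i < 3) x (inord (i + 0))) i
    + (-10 * x (inord 3) + (- third + eps) * (x (inord 4) + x (inord 5) + x (inord 6))).
Proof.
move=> L0 i; rewrite -(inord_val i).
have L0' : x (inord 0) + x (inord 1) + x (inord 2) != 0.
  by move: L0; rewrite sum3 !inordK // !addn0 => /gt_eqF ->.
have Hk : forall k, (k < 3)%N -> mxapp (Umx eps) x (inord (k + 0)) =
    (\sum_(i < 3) x (inord (i + 0))) * mxapp (Rmx eps) (fun j => x (inord (j + 0)) / \sum_(i < 3) x (inord (i + 0))) (inord k)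
    + (-10 * x (inord 3) + (- third + eps) * (x (inord 4) + x (inord 5) + x (inord 6))).
  move=> k; rewrite /mxapp sum7 !sum3 !inordK // !addn0.
  case: k => [|[|[|k]]] // _; rewrite !Uentry // !Rentry //=; field => //.
by rewrite inordK //; apply: Hk.
Qed.

Lemma blockU4 (R : realType) (eps : R) (x : 'I_7 -> R) :
  0 < \sum_(i < 3) x (inord (i + 4)) ->
  forall i : 'I_3, mxapp (Umx eps) x (inord (i + 4)) =
    (\sum_(i < 3) x (inord (i + 4))) * mxapp (Rmx eps) (fun j => x (inord (j + 4)) / \sum_(i < 3) x (inord (i + 4))) i
    + (- third * (x (inord 0) + x (inord 1) + x (inord 2)) + 10 * x (inord 3)).
Proof.
move=> L0 i; rewrite -(inord_val i).
have L0' : x (inord 4) + x (inord 5) + x (inord 6) != 0.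
  by move: L0; rewrite sum3 !inordK // => /gt_eqF ->.
have Hk : forall k, (k < 3)%N -> mxapp (Umx eps) x (inord (k + 4)) =
    (\sum_(i < 3) x (inord (i + 4))) * mxapp (Rmx eps) (fun j => x (inord (j + 4)) / \sum_(i < 3) x (inord (i + 4))) (inord k)
    + (- third * (x (inord 0) + x (inord 1) + x (inord 2)) + 10 * x (inord 3)).
  move=> k; rewrite /mxapp sum7 !sum3 !inordK //.
  case: k => [|[|[|k]]] // _; rewrite !Uentry // !Rentry //=; field => //.
by rewrite inordK //; apply: Hk.
Qed.
Lemma ac_add (R : realType) (a b : R) (f g : R -> R) :
  abs_continuous_on a b f -> abs_continuous_on a b g ->
  abs_continuous_on a b (fun t => f t + g t).
Proof.
move=> af ag e e0.
have e2 : 0 < e / 2 by rewrite divr_gt0.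
have [d1 d10 H1] := af _ e2; have [d2 d20 H2] := ag _ e2.
exists (Num.min d1 d2); first by rewrite lt_min d10 d20.
move=> m I Hab Hdis Hs.
have m1 : Num.min d1 d2 <= d1 by rewrite ge_min lexx.
have m2 : Num.min d1 d2 <= d2 by rewrite ge_min lexx orbT.
have s1 := H1 m I Hab Hdis (lt_le_trans Hs m1).
have s2 := H2 m I Hab Hdis (lt_le_trans Hs m2).
apply: (@le_lt_trans _ _ (\sum_(k < m) (`|f (I k).2 - f (I k).1| + `|g (I k).2 - g (I k).1|))).
  apply: ler_sum => k _.
  have -> : f (I k).2 + g (I k).2 - (f (I k).1 + g (I k).1) =
    (f (I k).2 - f (I k).1) + (g (I k).2 - g (I k).1) by ring.
  exact: ler_normD.
rewrite big_split /=; lra.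
Qed.

Lemma ac_mul (R : realType) (a b K : R) (w f : R -> R) :
  0 < K ->
  (forall u v, a <= u -> u <= v -> v <= b -> `|w v - w u| <= K * (v - u)) ->
  (forall t, a <= t -> t <= b -> `|w t| <= K /\ `|f t| <= K) ->
  abs_continuous_on a b f -> abs_continuous_on a b (fun t => w t * f t).
Proof.
move=> K0 wL bd af e e0.
have e2 : 0 < e / (2 * K) by rewrite divr_gt0 // mulr_gt0.
have e3 : 0 < e / (2 * (K * K)) by rewrite !divr_gt0 // !mulr_gt0.
have [d1 d10 H1] := af _ e2.
exists (Num.min d1 (e / (2 * (K * K)))); first by rewrite lt_min d10 e3.
move=> m I Hab Hdis Hs.
 have m1 : Num.min d1 (e / (2 * (K * K))) <= d1 by rewrite ge_min lexx.
have m2 : Num.min d1 (e / (2 * (K * K))) <= e / (2 * (K * K)) by rewrite ge_min lexx orbT.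
have s1 := H1 m I Hab Hdis (lt_le_trans Hs m1).
have s2 : \sum_(k < m) ((I k).2 - (I k).1) < e / (2 * (K * K)) := lt_le_trans Hs m2.
apply: (@le_lt_trans _ _ (\sum_(k < m) (K * `|f (I k).2 - f (I k).1| + K * (K * ((I k).2 - (I k).1))))).
  apply: ler_sum => k _.
  have [h1 [h2 h3]] := Hab k.
  have h2' : a <= (I k).2 by apply: le_trans h1 h2.
  have h1' : (I k).1 <= b by apply: le_trans h2 h3.
  have -> : w (I k).2 * f (I k).2 - w (I k).1 * f (I k).1 =
    w (I k).2 * (f (I k).2 - f (I k).1) + f (I k).1 * (w (I k).2 - w (I k).1) by ring.
  apply: le_trans (ler_normD _ _) _; rewrite !normrM.
  apply: lerD.
    apply: ler_wpM2r => //; exact: (bd _ h2' h3).1.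
  apply: ler_pM => //; first exact: (bd _ h1 h1').2.
  exact: wL.
rewrite big_split /= -!mulr_sumr.
have E1 : K * \sum_(k < m) `|f (I k).2 - f (I k).1| < e / 2.
  rewrite -(ltr_pM2l K0) in s1; apply: lt_le_trans s1 _.
  by rewrite le_eqVlt; apply/orP; left; apply/eqP; field; rewrite gt_eqF.
have E2 : K * (K * \sum_(k < m) ((I k).2 - (I k).1)) < e / 2.
  rewrite -(ltr_pM2l K0) -(ltr_pM2l K0) in s2; apply: lt_le_trans s2 _.
  by rewrite le_eqVlt; apply/orP; left; apply/eqP; field; rewrite gt_eqF.
lra.
Qed.

Lemma expR_lip (R : realType) (u v : R) : u <= v ->
  `|expR v - expR u| <= expR v * (v - u).
Proof.
move=> uv.
have h : expR u = expR v * expR (u - v) by rewrite -expRD addrCA subrr addr0.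
have h1 := expR_ge1Dx (u - v).
have ev := expR_gt0 v.
rewrite ger0_norm; last by rewrite subr_ge0 ler_expR.
rewrite h.
have : expR v * (1 + (u - v)) <= expR v * expR (u - v) by rewrite ler_pM2l.
have -> : expR v * (1 + (u - v)) = expR v - expR v * (v - u) by ring.
lra.
Qed.

Definition blk {R : realType} (o : nat) (x : R -> 'I_7 -> R) (t : R) :=
  \sum_(i < 3) x t (inord (i + o)).

Lemma blk_is_derive (R : realType) o (x : R -> 'I_7 -> R) t (y : 'I_7 -> R) :
  (forall j, derivable (fun s => x s j) t 1) ->
  (forall j, derive1 (fun s => x s j) t = y j - x t j) ->
  is_derive t 1 (blk o x) (\sum_(i < 3) y (inord (i + o)) - blk o x t).
Proof.
move=> der dy.
have -> : \sum_(i < 3) y (inord (i + o)) - blk o x t =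
  \sum_(i < 3) (y (inord (i + o)) - x t (inord (i + o))) by rewrite sumrB.
have -> : blk o x = \sum_(i < 3) (fun s => x s (inord (i + o))).
  by rewrite fct_sumE; apply/funext => s.
apply: is_derive_sum => i.
have := derivableP (der (inord (i + o))).
by rewrite -derive1E dy.
Qed.
Lemma blk_bnd (R : realType) o (x : R -> 'I_7 -> R) t : (o = 0 \/ o = 4)%N ->
  simplex 7 (x t) -> 0 <= blk o x t /\ blk o x t <= 1.
Proof.
move=> ho [xp xs]; rewrite /blk sum3 !inordK //; rewrite sum7 in xs.
have := xp (inord 0); have := xp (inord 1); have := xp (inord 2); have := xp (inord 3).
have := xp (inord 4); have := xp (inord 5); have := xp (inord 6).
case: ho => ->.
  rewrite !addn0; lra.
rewrite -[(0+4)%N]/4%N -[(1+4)%N]/5%N -[(2+4)%N]/6%N; lra.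
Qed.

Lemma blk_ac (R : realType) o (x : R -> 'I_7 -> R) T :
  (forall i, abs_continuous_on 0 T (fun s => x s i)) -> abs_continuous_on 0 T (blk o x).
Proof.
move=> H.
have -> : blk o x = fun s => x s (inord (0 + o)) + x s (inord (1 + o)) + x s (inord (2 + o)).
  by apply/funext => s; rewrite /blk sum3 !inordK.
by apply: ac_add; [apply: ac_add|]; apply: H.
Qed.

Lemma blk_pos (R : realType) (U : 'M[R]_7) (x : R -> 'I_7 -> R) o :
  (o = 0 \/ o = 4)%N -> BR_solution U x -> 0 < blk o x 0 ->
  forall T, 0 <= T -> 0 < blk o x T.
Proof.
move=> ho [Hs [Hac Hae]] b0 T T0.
have [A [mA A0 sub]] := Hae.
pose g := fun t => expR t * blk o x t.
have K0 : 0 < expR T := expR_gt0 T.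
have K1 : 1 <= expR T by have := expR_ge1Dx T; lra.
have acg : abs_continuous_on 0 T g.
  apply: (@ac_mul R 0 T (expR T)) => //.
  - move=> u v u0 uv vT; apply: le_trans (@expR_lip R u v uv) _.
    by rewrite ler_wpM2r ?subr_ge0 // ler_expR.
  - move=> t t0 tT; split; first by rewrite ger0_norm ?expR_ge0 // ler_expR.
    have [h1 h2] := @blk_bnd R o x t ho (Hs t t0).
    by rewrite ger0_norm //; apply: le_trans h2 K1.
  - exact: (@blk_ac R o x T (Hac T T0)).
have dini : forall t, 0 <= t -> t < T -> ~ A t -> forall e, 0 < e ->
    exists2 h, 0 < h & forall u, 0 < u -> u <= h -> g t - e * u <= g (t + u).
  move=> t t0 tT nA.
  have : (0 <= t -> (forall i, derivable (fun s => x s i) t 1) /\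
     exists2 y, BR U (x t) y & forall i, derive1 (fun s => x s i) t = y i - x t i).
    by apply: contrapT => /sub.
  move=> /(_ t0) [der [y [[yp ys] _] dy]].
  have Db := @blk_is_derive R o x t y der dy.
  have Dg : is_derive t 1 g (expR t *: (\sum_(i < 3) y (inord (i + o)) - blk o x t) + blk o x t *: expR t).
    exact: is_deriveM.
  apply: dini_of_derive.
    exact: (@ex_derive _ _ _ _ _ _ _ Dg).
  rewrite derive1E (@derive_val _ _ _ _ _ _ _ Dg).
  have -> : expR t *: (\sum_(i < 3) y (inord (i + o)) - blk o x t) + blk o x t *: expR t =
    expR t * \sum_(i < 3) y (inord (i + o)) by rewrite /GRing.scale /=; ring.
  by apply: mulr_ge0; [exact: expR_ge0|apply: sumr_ge0 => i _; exact: yp].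
have := @ac_mono R 0 T g A T0 acg mA A0 dini.
rewrite /g expR0 mul1r => h.
have : 0 < expR T * blk o x T by apply: lt_le_trans h.
by rewrite pmulr_rgt0.
Qed.
Lemma blk_final (R : realType) (o : nat) (x : R -> 'I_7 -> R) t (y v : 'I_7 -> R)
    (A : 'M[R]_3) (c : R) :
  (o = 0 \/ o = 4)%N ->
  (forall j, derivable (fun s => x s j) t 1) ->
  (forall j, derive1 (fun s => x s j) t = y j - x t j) ->
  simplex 7 y -> (forall z, simplex 7 z -> dotv z v <= dotv y v) ->
  0 < blk o x t ->
  (forall i : 'I_3, v (inord (i + o)) =
     blk o x t * mxapp A (fun j => x t (inord (j + o)) / blk o x t) i + c) ->
  derivable (blk o x) t 1 /\
  (forall i : 'I_3, derivable (fun s => x s (inord (i + o)) / blk o x s) t 1) /\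
  exists2 z, BR A (fun j => x t (inord (j + o)) / blk o x t) z &
    forall i : 'I_3, derive1 (fun s => x s (inord (i + o)) / blk o x s) t =
      (1 + derive1 (blk o x) t / blk o x t) * (z i - x t (inord (i + o)) / blk o x t).
Proof.
move=> ho der dy ys ybest B0 hv.
set B := blk o x t.
set Yb := \sum_(i < 3) y (inord (i + o)).
have Db := @blk_is_derive R o x t y der dy.
have dB : derive1 (blk o x) t = Yb - B by rewrite derive1E (@derive_val _ _ _ _ _ _ _ Db).
have Bn0 : B != 0 by rewrite gt_eqF.
have DV : is_derive t 1 (fun s => (blk o x s)^-1) (- B ^- 2 *: (Yb - B)).
  apply: DeriveDef; first exact: derivableV.
  by rewrite deriveV // -derive1E dB.
have Dq : forall i : 'I_3, is_derive t 1 (fun s => x s (inord (i + o)) / blk o x s)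
    (x t (inord (i + o)) *: (- B ^- 2 *: (Yb - B)) + B^-1 *: (y (inord (i + o)) - x t (inord (i + o)))).
  move=> i.
  have Dx : is_derive t 1 (fun s => x s (inord (i + o))) (y (inord (i + o)) - x t (inord (i + o))).
    by have := derivableP (der (inord (i + o))); rewrite -derive1E dy.
  exact: (is_deriveM Dx DV).
have dq : forall i : 'I_3, derive1 (fun s => x s (inord (i + o)) / blk o x s) t =
    x t (inord (i + o)) *: (- B ^- 2 *: (Yb - B)) + B^-1 *: (y (inord (i + o)) - x t (inord (i + o))).
  by move=> i; rewrite derive1E (@derive_val _ _ _ _ _ _ _ (Dq i)).
split; first exact: (@ex_derive _ _ _ _ _ _ _ Db).
split; first by move=> i; exact: (@ex_derive _ _ _ _ _ _ _ (Dq i)).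
have [yp ys1] := ys.
have Yb0 : 0 <= Yb by apply: sumr_ge0 => i _; exact: yp.
case: (ltrP 0 Yb) => Ybp.
- exists (fun i => y (inord (i + o)) / Yb).
    split.
      split; first by move=> i; apply: divr_ge0 => //; exact: yp.
      by rewrite -mulr_suml -/Yb divff // gt_eqF.
    move=> w sw; exact: (@br_block R o v y B c _ ho B0 ys ybest hv Ybp).
  move=> i; rewrite dq dB /GRing.scale /=; field.
  by rewrite Bn0 gt_eqF.
- have Y0 : Yb = 0 by apply/eqP; rewrite eq_le Ybp Yb0.
  have y0 : forall i : 'I_3, y (inord (i + o)) = 0.
    move=> i; apply: (@psumr_eq0P _ _ xpredT (fun i : 'I_3 => y (inord (i + o)))) => //.
  have := @br_exists3 R (mxapp A (fun j => x t (inord (j + o)) / B)); case=> zz [sz zb].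
  exists zz; first by split.
  move=> i; rewrite dq dB y0 Y0 /GRing.scale /=; field.
  by rewrite Bn0.
Qed.

Theorem lemma6 (R : realType) (eps : R) (x : R -> 'I_7 -> R) :
  0 < eps -> eps < 2 / 9 ->
  BR_solution (Umx eps) x ->
  ~ (x 0 (inord 0) = x 0 (inord 1) /\ x 0 (inord 1) = x 0 (inord 2)) ->
  ~ (x 0 (inord 4) = x 0 (inord 5) /\ x 0 (inord 5) = x 0 (inord 6)) ->
  (forall t, 0 <= t -> 0 < lam x t /\ 0 < muu x t) /\
  {ae (@lebesgue_measure R), forall t, 0 <= t ->
     (derivable (lam x) t 1 /\ derivable (muu x) t 1 /\
      (forall i, derivable (fun s => xbar x s i) t 1) /\
      (forall i, derivable (fun s => xhat x s i) t 1)) /\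
     (exists2 y, BR (Rmx eps) (xbar x t) y &
        forall i, derive1 (fun s => xbar x s i) t
                  = (1 + derive1 (lam x) t / lam x t) * (y i - xbar x t i)) /\
     (exists2 y, BR (Rmx eps) (xhat x t) y &
        forall i, derive1 (fun s => xhat x s i) t
                  = (1 + derive1 (muu x) t / muu x t) * (y i - xhat x t i))}.
Proof.
move=> e0 e29 Hsol n1 n2.
have Hsol' := Hsol; case: Hsol' => [Hs [Hac Hae]].
have Elam : lam x = blk 0 x.
  by apply/funext => s; rewrite /lam /blk; apply: eq_bigr => i _; rewrite addn0.
have Emu : muu x = blk 4 x by [].
have [xp0 xs0] := Hs 0 (lexx 0).
have b00 : 0 < blk 0 x 0.
  rewrite /blk sum3 !inordK // !addn0.
  have := xp0 (inord 0); have := xp0 (inord 1); have := xp0 (inord 2) => h2 h1 h0.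
  case: (ltrP 0 (x 0 (inord 0) + x 0 (inord 1) + x 0 (inord 2))) => // h.
  by exfalso; apply: n1; split; lra.
have b40 : 0 < blk 4 x 0.
  rewrite /blk sum3 !inordK // -[(0+4)%N]/4%N -[(1+4)%N]/5%N -[(2+4)%N]/6%N.
  have := xp0 (inord 4); have := xp0 (inord 5); have := xp0 (inord 6) => h2 h1 h0.
  case: (ltrP 0 (x 0 (inord 4) + x 0 (inord 5) + x 0 (inord 6))) => // h.
  by exfalso; apply: n2; split; lra.
have P0 := @blk_pos R (Umx eps) x 0 (or_introl erefl) Hsol b00.
have P4 := @blk_pos R (Umx eps) x 4 (or_intror erefl) Hsol b40.
split.
  by move=> t t0; rewrite Elam Emu; split; [apply: P0|apply: P4].
have [A [mA A0 sub]] := Hae.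
exists A; split => // t nQ; apply: contrapT => nA; apply: nQ => t0.
have Ht := contrapT (fun nP => nA (sub t nP)).
have [der [y [ys ybest] dy]] := Ht t0.
have F0 := @blk_final R 0 x t y (mxapp (Umx eps) (x t)) (Rmx eps) _ (or_introl erefl)
  der dy ys ybest (P0 t t0) (@blockU0 R eps (x t) (P0 t t0)).
have F4 := @blk_final R 4 x t y (mxapp (Umx eps) (x t)) (Rmx eps) _ (or_intror erefl)
  der dy ys ybest (P4 t t0) (@blockU4 R eps (x t) (P4 t t0)).
have Exb : xbar x = fun s i => x s (inord (i + 0)) / blk 0 x s.
  by apply/funext => s; apply/funext => i; rewrite /xbar addn0 Elam.
have Exh : xhat x = fun s i => x s (inord (i + 4)) / blk 4 x s by [].
rewrite Elam Emu Exb Exh /=.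
have [d0 [dq0 [z0 bz0 ez0]]] := F0.
have [d4 [dq4 [z4 bz4 ez4]]] := F4.
split; first by split => //; split => //; split.
by split; [exists z0|exists z4].
Qed.
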